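(* Let $c\in\mathsf{ACirc}[n,m]$. Then $[\![c]\!]=\{(p,f(p)):p\in k(x)^n\}$ for some rational affine map $f:k(x)^n\to k(x)^m$ if and only if there exists an affine signal flow graph $g$ of sort $(n,m)$ such that $[\![g]\!]=[\![c]\!]$.
   Context: Fix a field $k$; $k(x)$ is the field of polynomial fractions. Circuits: terms built from generators with sorts $(n,m)$: copier $\Delta:(1,2)$, discard $!:(1,0)$, amplifier $\mathsf{s}_r:(1,1)$ ($r\in k$), register $\mathsf{x}:(1,1)$, adder $+:(2,1)$, zero $0:(0,1)$, one $\mathbf{1}:(0,1)$; mirror images $\Delta^{op}:(2,1)$, $!^{op}:(0,1)$, $\mathsf{s}_r^{op}$, $\mathsf{x}^{op}:(1,1)$, $+^{op}:(1,2)$, $0^{op}:(1,0)$, $\mathbf{1}^{op}:(1,0)$; $\mathrm{id}_0:(0,0),\mathrm{id}_1:(1,1),\mathrm{sw}:(2,2)$; closed under $;$ and $\oplus$; $\mathsf{ACirc}[n,m]$: circuits of sort $(n,m)$. Denotation: $[\![\Delta]\!]=\{(p,(p,p))\}$, $[\![!]\!]=\{(p,\bullet)\}$, $[\![+]\!]=\{((p,q),p+q)\}$, $[\![0]\!]=\{(\bullet,0)\}$, $[\![\mathbf 1]\!]=\{(\bullet,1)\}$, $[\![\mathsf s_r]\!]=\{(p,rp)\}$, $[\![\mathsf x]\!]=\{(p,px)\}$; mirrored generators denote converse relations; structural ones identity, swap, $\{(\bullet,\bullet)\}$; $;$ relational composition, $\oplus$ product. Feedback: for $c:(n+1,m+1)$,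 $\mathrm{Tr}(c):(n,m)$ connects the last right port of $c$ to its last left port through a register $\mathsf x$, bending the wire with the cup $!^{op};\Delta:(0,2)$ and the cap $\Delta^{op};!:(2,0)$. Affine signal flow graphs: smallest class containing $\Delta,!,\mathsf s_r,\mathsf x,+,0,\mathbf 1,\mathrm{id}_0,\mathrm{id}_1,\mathrm{sw}$ and closed under $;$, $\oplus$, $\mathrm{Tr}$. $\mathsf{Rat}\subseteq k(x)$: fractions $p/q$ with $q$ having nonzero constant term. An affine map $f(p)=Ap+b$ is rational if $A$ and $b$ have all entries in $\mathsf{Rat}$. *)

(* Defs.v *)
From HB Require Import structures.
From mathcomp Require Import all_boot all_order all_algebra.
From mathcomp Require Import fraction.
Set Implicit Arguments. Unset Strict Implicit. Unset Printing Implicit Defensive.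
Import Order.TTheory GRing.Theory Num.Theory.
Local Open Scope ring_scope.

Notation "x %:F" := (@FracField.tofrac _ x).

Definition kx (k : fieldType) : fieldType := {fraction {poly k}}.

Definition kx_const (k : fieldType) (r : k) : kx k := (r%:P)%:F.
Definition kx_x (k : fieldType) : kx k := ('X : {poly k})%:F.

Definition ratp (k : fieldType) (f : kx k) : Prop :=
  exists p q : {poly k}, q.[0] != 0 /\ f = p%:F / q%:F.

Inductive circ (k : Type) : nat -> nat -> Type :=
| Copy : circ k 1 2
| Disc : circ k 1 0
| Amp : k -> circ k 1 1
| Reg : circ k 1 1
| Add : circ k 2 1
| Zero : circ k 0 1
| One : circ k 0 1
| CopyOp : circ k 2 1
| DiscOp : circ k 0 1
| AmpOp : k -> circ k 1 1
| RegOp : circ k 1 1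
| AddOp : circ k 1 2
| ZeroOp : circ k 1 0
| OneOp : circ k 1 0
| Id0 : circ k 0 0
| Id1 : circ k 1 1
| Sw : circ k 2 2
| Seq : forall n m l, circ k n m -> circ k m l -> circ k n l
| Par : forall n1 m1 n2 m2, circ k n1 m1 -> circ k n2 m2 -> circ k (n1 + n2) (m1 + m2).

Arguments Copy {k}. Arguments Disc {k}. Arguments Amp {k}. Arguments Reg {k}.
Arguments Add {k}. Arguments Zero {k}. Arguments One {k}. Arguments CopyOp {k}.
Arguments DiscOp {k}. Arguments AmpOp {k}. Arguments RegOp {k}. Arguments AddOp {k}.
Arguments ZeroOp {k}. Arguments OneOp {k}. Arguments Id0 {k}. Arguments Id1 {k}.
Arguments Sw {k}. Arguments Seq {k n m l}. Arguments Par {k n1 m1 n2 m2}.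

Section Gens.
Variable k : fieldType.
Local Notation F := (kx k).
Definition rel_copy (p : 'cV[F]_1) (q : 'cV[F]_2) := q = const_mx (p ord0 ord0).
Definition rel_disc (p : 'cV[F]_1) (q : 'cV[F]_0) := True.
Definition rel_amp (r : k) (p q : 'cV[F]_1) := q = kx_const r *: p.
Definition rel_reg (p q : 'cV[F]_1) := q = kx_x k *: p.
Definition rel_add (p : 'cV[F]_2) (q : 'cV[F]_1) :=
  q = const_mx (p ord0 ord0 + p ord_max ord0).
Definition rel_zero (p : 'cV[F]_0) (q : 'cV[F]_1) := q = 0.
Definition rel_one (p : 'cV[F]_0) (q : 'cV[F]_1) := q = const_mx 1.
Definition rel_sw (p q : 'cV[F]_2) := q = \col_(i < 2) p (rev_ord i) ord0.
End Gens.

Fixpoint sem (k : fieldType) n m (c : circ k n m) : 'cV[kx k]_n -> 'cV[kx k]_m -> Prop :=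
  match c in circ _ n m return 'cV[kx k]_n -> 'cV[kx k]_m -> Prop with
  | Copy => @rel_copy k
  | Disc => @rel_disc k
  | Amp r => rel_amp r
  | Reg => @rel_reg k
  | Add => @rel_add k
  | Zero => @rel_zero k
  | One => @rel_one k
  | CopyOp => fun p q => rel_copy q p
  | DiscOp => fun p q => rel_disc q p
  | AmpOp r => fun p q => rel_amp r q p
  | RegOp => fun p q => rel_reg q p
  | AddOp => fun p q => rel_add q p
  | ZeroOp => fun p q => rel_zero q p
  | OneOp => fun p q => rel_one q p
  | Id0 => fun p q => p = q
  | Id1 => fun p q => p = q
  | Sw => @rel_sw k
  | Seq _ _ _ c1 c2 => fun p q => exists y, sem c1 p y /\ sem c2 y q
  | Par _ _ _ _ c1 c2 => fun p q =>
      sem c1 (usubmx p) (usubmx q) /\ sem c2 (dsubmx p) (dsubmx q)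
  end.

Definition castc (k : Type) n m n' m' (e1 : n = n') (e2 : m = m') (c : circ k n m)
  : circ k n' m' :=
  match e1 in _ = a, e2 in _ = b return circ k a b with erefl, erefl => c end.

Definition cup {k : Type} : circ k 0 2 := Seq DiscOp Copy.
Definition cap {k : Type} : circ k 2 0 := Seq CopyOp Disc.

Fixpoint idn (k : Type) (n : nat) : circ k n n :=
  match n return circ k n n with
  | 0 => Id0
  | n'.+1 => Par Id1 (idn k n')
  end.

(* Tr(c) = (id_n + cup) ; (c + id_1) ; (id_m + x + id_1) ; (id_m + cap) *)
Definition trace (k : Type) n m (c : circ k (n + 1) (m + 1)) : circ k n m :=
  Seq (castc (addn0 n) (erefl (n + 2)) (Par (idn k n) cup))
  (Seq (castc (esym (addnA n 1 1)) (esym (addnA m 1 1)) (Par c Id1))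
  (Seq (Par (idn k m) (Par Reg Id1))
       (castc (erefl (m + 2)) (addn0 m) (Par (idn k m) cap)))).

Inductive asfg (k : Type) : forall n m, circ k n m -> Prop :=
| asfg_copy : asfg Copy
| asfg_disc : asfg Disc
| asfg_amp r : asfg (Amp r)
| asfg_reg : asfg Reg
| asfg_add : asfg Add
| asfg_zero : asfg Zero
| asfg_one : asfg One
| asfg_id0 : asfg Id0
| asfg_id1 : asfg Id1
| asfg_sw : asfg Sw
| asfg_seq n m l (c : circ k n m) (d : circ k m l) :
    asfg c -> asfg d -> asfg (Seq c d)
| asfg_par n1 m1 n2 m2 (c : circ k n1 m1) (d : circ k n2 m2) :
    asfg c -> asfg d -> asfg (Par c d)
| asfg_tr n m (c : circ k (n + 1) (m + 1)) : asfg c -> asfg (trace c).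

(* Main.v *)
Require Import Defs.
From HB Require Import structures.
From mathcomp Require Import all_boot all_order all_algebra.
From mathcomp Require Import fraction.
From mathcomp Require Import ring.
Set Implicit Arguments. Unset Strict Implicit. Unset Printing Implicit Defensive.
Import GRing.Theory.
Local Open Scope ring_scope.

Lemma f_add (G : fieldType) (a b c d : G) : b != 0 -> d != 0 ->
  a / b + c / d = (a * d + c * b) / (b * d).
Proof. by move=> hb hd; field; rewrite hb hd. Qed.
Lemma f_mul (G : fieldType) (a b c d : G) : b != 0 -> d != 0 ->
  (a / b) * (c / d) = (a * c) / (b * d).
Proof. by move=> hb hd; field; rewrite hb hd. Qed.
Lemma f_opp (G : fieldType) (a b : G) : - (a / b) = (- a) / b.
Proof. by rewrite mulNr. Qed.
Lemma f_fb1 (G : fieldType) (x p q : G) : q != 0 -> q - x * p != 0 ->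
  1 - x * (p / q) != 0.
Proof.
move=> hq hd; have -> : 1 - x * (p / q) = (q - x * p) / q by field.
by rewrite mulf_neq0 ?invr_eq0.
Qed.
Lemma f_fb2 (G : fieldType) (x p q : G) : q != 0 -> q - x * p != 0 ->
  x / (1 - x * (p / q)) = (x * q) / (q - x * p).
Proof.
move=> hq hd; have -> : 1 - x * (p / q) = (q - x * p) / q by field.
by field; rewrite hq hd.
Qed.

Section Rat.
Variable k : fieldType.
Local Notation F := (kx k).
Local Notation ratp := (@ratp k).

Lemma nz_h0 (Q : {poly k}) : Q.[0] != 0 -> (Q%:F : F) != 0.
Proof. by move=> h; rewrite tofrac_eq0; apply: contraNneq h => ->; rewrite horner0. Qed.

Lemma ratp_tofrac (P : {poly k}) : ratp (P%:F : F).
Proof. exists P, 1; split; first by rewrite hornerC oner_eq0. by rewrite tofrac1 divr1. Qed.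

Lemma ratp0 : ratp (0 : F).
Proof. by rewrite -tofrac0; apply: ratp_tofrac. Qed.
Lemma ratp1 : ratp (1 : F).
Proof. by rewrite -tofrac1; apply: ratp_tofrac. Qed.
Lemma ratp_const r : ratp (kx_const r).
Proof. exact: ratp_tofrac. Qed.
Lemma ratp_x : ratp (kx_x k).
Proof. exact: ratp_tofrac. Qed.

Lemma ratpD (a b : F) : ratp a -> ratp b -> ratp (a + b).
Proof.
move=> [P1 [Q1 [h1 ->]]] [P2 [Q2 [h2 ->]]].
exists (P1 * Q2 + P2 * Q1), (Q1 * Q2); split; first by rewrite hornerM mulf_neq0.
by rewrite tofracD !tofracM f_add // nz_h0.
Qed.
Lemma ratpM (a b : F) : ratp a -> ratp b -> ratp (a * b).
Proof.
move=> [P1 [Q1 [h1 ->]]] [P2 [Q2 [h2 ->]]].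
exists (P1 * P2), (Q1 * Q2); split; first by rewrite hornerM mulf_neq0.
by rewrite !tofracM f_mul // nz_h0.
Qed.
Lemma ratpN (a : F) : ratp a -> ratp (- a).
Proof.
move=> [P1 [Q1 [h1 ->]]]; exists (- P1), Q1; split => //.
by rewrite tofracN f_opp.
Qed.
Lemma ratp_sum (I : finType) (f : I -> F) : (forall i, ratp (f i)) -> ratp (\sum_i f i).
Proof. move=> h; apply: (big_ind ratp) => //; [exact: ratp0 | exact: ratpD]. Qed.

Lemma ratp_fb (a : F) : ratp a ->
  (1 - kx_x k * a != 0) /\ ratp (kx_x k / (1 - kx_x k * a)).
Proof.
move=> [P [Q [h ->]]].
have hd : (Q - 'X * P).[0] != 0.
  by rewrite hornerD hornerN hornerM hornerX mul0r subr0.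
have hq := nz_h0 h; have hd' := nz_h0 hd.
rewrite tofracB tofracM in hd'.
split; first exact: f_fb1.
exists ('X * Q), (Q - 'X * P); split => //.
by rewrite tofracB !tofracM f_fb2.
Qed.

End Rat.


Section Sem.
Variable k : fieldType.
Local Notation F := (kx k).

Lemma cV1P (u v : 'cV[F]_1) : u = v <-> u 0 0 = v 0 0.
Proof. by split => [->//|h]; apply/matrixP => i j; rewrite !ord1. Qed.

Lemma col_mx_const1 (t : 'cV[F]_1) : (col_mx t t : 'cV_2) = const_mx (t 0 0).
Proof. by apply/matrixP => i j; rewrite !mxE; case: split => l; rewrite !ord1. Qed.

Lemma sem_castc n m n' m' (e1 : n = n') (e2 : m = m') (c : circ k n m) p q :
  sem (castc e1 e2 c) p q <->
  sem c (castmx (esym e1, erefl) p) (castmx (esym e2, erefl) q).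
Proof. by case: n' / e1 p; case: m' / e2 q => q p; rewrite !castmx_id. Qed.

Lemma sem_par n1 m1 n2 m2 (c : circ k n1 m1) (d : circ k n2 m2) p q :
  sem (Par c d) p q <-> sem c (usubmx p) (usubmx q) /\ sem d (dsubmx p) (dsubmx q).
Proof. by []. Qed.

Lemma sem_reg (p q : 'cV[F]_1) : sem Reg p q <-> q = kx_x k *: p.
Proof. by []. Qed.
Lemma sem_id1 (p q : 'cV[F]_1) : sem Id1 p q <-> p = q.
Proof. by []. Qed.

Lemma sem_idn n (p q : 'cV[F]_n) : sem (idn k n) p q <-> p = q.
Proof.
elim: n p q => [|n IH] p q /=; first done.
rewrite IH; split => [[h1 h2]|->//].
by rewrite -[p](@vsubmxK _ 1 n) -[q](@vsubmxK _ 1 n) h1 h2.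
Qed.

Lemma sem_cup (a : 'cV[F]_0) (b : 'cV[F]_2) :
  sem cup a b <-> exists t : 'cV_1, b = col_mx t t.
Proof.
split => [[y [_ ->]]|[t ->]]; first by exists y; rewrite col_mx_const1.
by exists t; split => //; rewrite /= /rel_copy col_mx_const1.
Qed.

Lemma sem_cap (a : 'cV[F]_2) (b : 'cV[F]_0) (u v : 'cV[F]_1) :
  a = col_mx u v -> (sem cap a b <-> u = v).
Proof.
move=> ->; split => [[y [h _]]|->].
  by move: h; rewrite /= /rel_copy -col_mx_const1 => h; case: (@eq_col_mx F 1 1 1 _ _ _ _ h) => -> ->.
by exists v; split => //; rewrite /= /rel_copy col_mx_const1.
Qed.

Lemma usub_cast0 n (p : 'cV[F]_n) :
  usubmx (castmx (esym (addn0 n), erefl) p : 'cV_(n + 0)) = p.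
Proof. by apply/matrixP => i j; rewrite mxE castmxE /=; congr (p _ _); apply: val_inj. Qed.

Lemma colA_cast m1 m2 m3 (e : (m1 + (m2 + m3) = m1 + m2 + m3)%N)
  (A1 : 'cV[F]_m1) (A2 : 'cV[F]_m2) (A3 : 'cV[F]_m3) :
  castmx (e, erefl) (col_mx A1 (col_mx A2 A3)) = col_mx (col_mx A1 A2) A3.
Proof. by rewrite col_mxA castmx_comp castmx_id. Qed.

Lemma colA_cast' m1 m2 m3 (e : (m1 + m2 + m3 = m1 + (m2 + m3))%N)
  (A1 : 'cV[F]_m1) (A2 : 'cV[F]_m2) (A3 : 'cV[F]_m3) :
  castmx (e, erefl) (col_mx (col_mx A1 A2) A3) = col_mx A1 (col_mx A2 A3).
Proof. by rewrite col_mxA; apply: eq_castmx. Qed.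

Lemma L1 n (p : 'cV[F]_n) (y1 : 'cV[F]_(n + 2)) :
  sem (castc (addn0 n) (erefl (n + 2)) (Par (idn k n) cup)) p y1 <->
  exists t : 'cV_1, y1 = col_mx p (col_mx t t).
Proof.
rewrite sem_castc castmx_id sem_par sem_idn usub_cast0 sem_cup.
split => [[h [t ht]]|[t ->]].
  by exists t; rewrite -[y1](@vsubmxK _ n 2) -h ht.
by rewrite col_mxKu col_mxKd; split => //; exists t.
Qed.

Lemma L2 n m (c : circ k (n + 1) (m + 1)) (p : 'cV[F]_n) (t1 t2 : 'cV[F]_1)
  (y2 : 'cV[F]_(m + 2)) :
  sem (castc (esym (addnA n 1 1)) (esym (addnA m 1 1)) (Par c Id1))
    (col_mx p (col_mx t1 t2)) y2 <->
  exists (a : 'cV[F]_m) (z : 'cV[F]_1), y2 = col_mx a (col_mx z t2) /\ sem c (col_mx p t1) (col_mx a z).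
Proof.
rewrite sem_castc colA_cast sem_par.
split => [[h1 h2]|[a [z [-> h]]]]; last first.
  by rewrite colA_cast !col_mxKu !col_mxKd.
set Y := castmx _ y2 in h1 h2.
have hy : y2 = castmx (esym (esym (esym (addnA m 1 1))), erefl) Y
  by rewrite /Y castmx_comp castmx_id.
rewrite col_mxKu in h1; rewrite col_mxKd in h2.
have HY : Y = col_mx (col_mx (usubmx (usubmx Y)) (dsubmx (usubmx Y))) t2.
  by rewrite h2 !vsubmxK.
exists (usubmx (usubmx Y)), (dsubmx (usubmx Y)); split; last by rewrite vsubmxK.
by rewrite hy {1}HY colA_cast'.
Qed.

Lemma L3 m (a : 'cV[F]_m) (z t : 'cV[F]_1) (y3 : 'cV[F]_(m + 2)) :
  sem (Par (idn k m) (Par Reg Id1)) (col_mx a (col_mx z t)) y3 <->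
  y3 = col_mx a (col_mx (kx_x k *: z : 'cV[F]_1) t).
Proof.
rewrite sem_par sem_par sem_idn sem_reg sem_id1 !col_mxKu !col_mxKd.
have e1 : usubmx (col_mx z t) = z := col_mxKu z t.
rewrite e1.
split => [[h1 [h2 h3]]|->].
  by rewrite -[y3](@vsubmxK _ m 2) -[dsubmx y3](@vsubmxK _ 1 1) -h1 h2 -h3.
rewrite (@col_mxKd F m (1+1) 1 a) (@col_mxKu F m (1+1) 1 a).
by rewrite (@col_mxKd F 1 1 1) (@col_mxKu F 1 1 1).
Qed.

Lemma L4 m (a : 'cV[F]_m) (u v : 'cV[F]_1) (q : 'cV[F]_m) :
  sem (castc (erefl (m + 2)) (addn0 m) (Par (idn k m) cap)) (col_mx a (col_mx u v)) q
  <-> q = a /\ u = v.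
Proof.
rewrite sem_castc castmx_id sem_par col_mxKu col_mxKd sem_idn usub_cast0.
rewrite (sem_cap _ (erefl (col_mx u v))).
by split => [[-> ->]|[-> ->]].
Qed.

Lemma sem_trace n m (c : circ k (n + 1) (m + 1)) (p : 'cV[F]_n) (q : 'cV[F]_m) :
  sem (trace c) p q <->
  exists y z : 'cV[F]_1, sem c (col_mx p y) (col_mx q z) /\ y = kx_x k *: z.
Proof.
split.
  move=> [y1 [/L1 [t ->] [y2 [/L2 [a [z [-> hc]]] [y3 [/L3 -> /L4 [ea ez]]]]]]].
  by exists t, z; rewrite ea ez.
move=> [y [z [hc hy]]].
exists (col_mx p (col_mx y y)); split; first by apply/L1; exists y.
exists (col_mx q (col_mx z y)); split; first by apply/L2; exists q, z.
exists (col_mx q (col_mx (kx_x k *: z) y)); split; first by apply/L3.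
by apply/L4.
Qed.

End Sem.


Lemma g_tr1 (G : fieldType) (x a w z : G) : z = w + x * z * a -> 1 - x * a != 0 ->
  z = w / (1 - x * a).
Proof.
move=> hz h; have e : w = z - x * z * a by rewrite {1}hz addrK.
by rewrite e; field; rewrite h.
Qed.
Lemma g_tr2 (G : fieldType) (x a w : G) : 1 - x * a != 0 ->
  w / (1 - x * a) = w + x * (w / (1 - x * a)) * a.
Proof. by move=> h; field; rewrite h. Qed.
Lemma g_tr3 (G : fieldType) (x a w : G) : 1 - x * a != 0 ->
  x * (w / (1 - x * a)) = x / (1 - x * a) * w.
Proof. by move=> h; field; rewrite h. Qed.
Lemma addr_shuf (V : zmodType) (x v w b : V) : x + (v + w) + b = x + v + (b + w).
Proof. by rewrite (addrC b w) !addrA. Qed.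

Section Aff.
Variable k : fieldType.
Local Notation F := (kx k).
Local Notation ratp := (@ratp k).

Definition rmx m n (M : 'M[F]_(m, n)) := forall i j, ratp (M i j).

Definition isaff n m (R : 'cV[F]_n -> 'cV[F]_m -> Prop) :=
  exists (A : 'M[F]_(m, n)) (b : 'cV[F]_m),
    rmx A /\ rmx b /\ (forall p q, R p q <-> q = A *m p + b).

Lemma rmx0 m n : rmx (0 : 'M[F]_(m, n)).
Proof. by move=> i j; rewrite mxE; apply: ratp0. Qed.
Lemma rmx_const m n a : ratp a -> rmx (const_mx a : 'M[F]_(m, n)).
Proof. by move=> h i j; rewrite mxE. Qed.
Lemma rmx_scalar n a : ratp a -> rmx (a%:M : 'M[F]_n).
Proof. by move=> h i j; rewrite mxE; case: (i == j) => //=; apply: ratp0. Qed.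
Lemma rmx_add m n (A B : 'M[F]_(m, n)) : rmx A -> rmx B -> rmx (A + B).
Proof. by move=> hA hB i j; rewrite mxE; apply: ratpD. Qed.
Lemma rmx_scale m n a (A : 'M[F]_(m, n)) : ratp a -> rmx A -> rmx (a *: A).
Proof. by move=> ha hA i j; rewrite mxE; apply: ratpM. Qed.
Lemma rmx_mul m n l (A : 'M[F]_(m, n)) (B : 'M[F]_(n, l)) : rmx A -> rmx B -> rmx (A *m B).
Proof. by move=> hA hB i j; rewrite mxE; apply: ratp_sum => t; apply: ratpM. Qed.
Lemma rmx_col m1 m2 n (A : 'M[F]_(m1, n)) (B : 'M[F]_(m2, n)) :
  rmx A -> rmx B -> rmx (col_mx A B).
Proof. by move=> hA hB i j; rewrite mxE; case: split => l. Qed.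
Lemma rmx_row m n1 n2 (A : 'M[F]_(m, n1)) (B : 'M[F]_(m, n2)) :
  rmx A -> rmx B -> rmx (row_mx A B).
Proof. by move=> hA hB i j; rewrite mxE; case: split => l. Qed.
Lemma rmx_block m1 m2 n1 n2 (A : 'M[F]_(m1, n1)) (B : 'M[F]_(m1, n2))
  (C : 'M[F]_(m2, n1)) (D : 'M[F]_(m2, n2)) :
  rmx A -> rmx B -> rmx C -> rmx D -> rmx (block_mx A B C D).
Proof. by move=> *; apply: rmx_col; apply: rmx_row. Qed.
Lemma rmx_ul m1 m2 n1 n2 (A : 'M[F]_(m1 + m2, n1 + n2)) : rmx A -> rmx (ulsubmx A).
Proof. by move=> h i j; rewrite !mxE. Qed.
Lemma rmx_ur m1 m2 n1 n2 (A : 'M[F]_(m1 + m2, n1 + n2)) : rmx A -> rmx (ursubmx A).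
Proof. by move=> h i j; rewrite !mxE. Qed.
Lemma rmx_dl m1 m2 n1 n2 (A : 'M[F]_(m1 + m2, n1 + n2)) : rmx A -> rmx (dlsubmx A).
Proof. by move=> h i j; rewrite !mxE. Qed.
Lemma rmx_dr m1 m2 n1 n2 (A : 'M[F]_(m1 + m2, n1 + n2)) : rmx A -> rmx (drsubmx A).
Proof. by move=> h i j; rewrite !mxE. Qed.
Lemma rmx_u m1 m2 n (A : 'M[F]_(m1 + m2, n)) : rmx A -> rmx (usubmx A).
Proof. by move=> h i j; rewrite !mxE. Qed.
Lemma rmx_d m1 m2 n (A : 'M[F]_(m1 + m2, n)) : rmx A -> rmx (dsubmx A).
Proof. by move=> h i j; rewrite !mxE. Qed.

Lemma mulmx_cV1 m (M : 'M[F]_(m, 1)) (v : 'cV[F]_1) : M *m v = v 0 0 *: M.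
Proof. by rewrite {1}[v]mx11_scalar mul_mx_scalar. Qed.

Lemma isaff_copy : isaff (sem (@Copy k)).
Proof.
exists (const_mx 1), 0; split; first exact: rmx_const (ratp1 k).
split; first exact: rmx0.
move=> p q; rewrite addr0 mulmx_cV1 /=/rel_copy.
suff -> : p 0 0 *: (const_mx 1 : 'cV[F]_2) = const_mx (p 0 0) by [].
by apply/matrixP => i j; rewrite !mxE mulr1.
Qed.

Lemma isaff_disc : isaff (sem (@Disc k)).
Proof.
exists 0, 0; split; first exact: rmx0. split; first exact: rmx0.
by move=> p q; split => // _; apply/matrixP => [[]].
Qed.

Lemma isaff_amp r : isaff (sem (@Amp k r)).
Proof.
exists (kx_const r)%:M, 0; split; first exact: rmx_scalar (ratp_const r).
split; first exact: rmx0.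
by move=> p q; rewrite addr0 mul_scalar_mx.
Qed.

Lemma isaff_reg : isaff (sem (@Reg k)).
Proof.
exists (kx_x k)%:M, 0; split; first exact: rmx_scalar (ratp_x k).
split; first exact: rmx0.
by move=> p q; rewrite addr0 mul_scalar_mx.
Qed.

Lemma isaff_add : isaff (sem (@Add k)).
Proof.
exists (const_mx 1), 0; split; first exact: rmx_const (ratp1 k).
split; first exact: rmx0.
move=> p q; rewrite addr0 /= /rel_add.
suff -> : (const_mx 1 : 'M[F]_(1, 2)) *m p = const_mx (p 0 0 + p ord_max 0) by [].
apply/matrixP => i j; rewrite !ord1 !mxE big_ord_recr big_ord1 /= !mxE !mul1r.
by congr (p _ _ + _); apply: val_inj.
Qed.

Lemma isaff_zero : isaff (sem (@Zero k)).
Proof.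
exists 0, 0; split; first exact: rmx0. split; first exact: rmx0.
by move=> p q; rewrite mul0mx addr0.
Qed.

Lemma isaff_one : isaff (sem (@One k)).
Proof.
exists 0, (const_mx 1); split; first exact: rmx0.
split; first exact: rmx_const (ratp1 k).
by move=> p q; rewrite mul0mx add0r.
Qed.

Lemma isaff_id0 : isaff (sem (@Id0 k)).
Proof.
exists 0, 0; split; first exact: rmx0. split; first exact: rmx0.
by move=> p q; split => _; apply/matrixP => [[]].
Qed.

Lemma isaff_id1 : isaff (sem (@Id1 k)).
Proof.
exists 1%:M, 0; split; first exact: rmx_scalar (ratp1 k).
split; first exact: rmx0.
by move=> p q; rewrite addr0 mul1mx; split => ->.
Qed.

Lemma isaff_sw : isaff (sem (@Sw k)).
Proof.
exists (\matrix_(i < 2, j < 2) (j == rev_ord i)%:R), 0; split.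
  move=> i j; rewrite mxE; case: (j == rev_ord i) => /=; [exact: ratp1 | exact: ratp0].
split; first exact: rmx0.
move=> p q; rewrite addr0 /= /rel_sw.
suff -> : (\matrix_(i < 2, j < 2) (j == rev_ord i)%:R : 'M[F]_2) *m p =
  \col_(i < 2) p (rev_ord i) ord0 by [].
apply/matrixP => i j; rewrite !ord1 !mxE (bigD1 (rev_ord i)) //= !mxE eqxx mul1r.
by rewrite big1 ?addr0 // => l hl; rewrite mxE (negbTE hl) mul0r.
Qed.

Lemma isaff_seq n m l (R1 : 'cV[F]_n -> 'cV[F]_m -> Prop) (R2 : 'cV[F]_m -> 'cV[F]_l -> Prop) :
  isaff R1 -> isaff R2 -> isaff (fun p q => exists y, R1 p y /\ R2 y q).
Proof.
move=> [A1 [b1 [hA1 [hb1 h1]]]] [A2 [b2 [hA2 [hb2 h2]]]].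
exists (A2 *m A1), (A2 *m b1 + b2); split; first exact: rmx_mul.
split; first by apply: rmx_add => //; apply: rmx_mul.
move=> p q; split.
  by move=> [y [/h1 -> /h2 ->]]; rewrite mulmxDr mulmxA addrA.
by move=> ->; exists (A1 *m p + b1); split; [apply/h1|apply/h2; rewrite mulmxDr mulmxA addrA].
Qed.

Lemma isaff_par n1 m1 n2 m2 (R1 : 'cV[F]_n1 -> 'cV[F]_m1 -> Prop)
  (R2 : 'cV[F]_n2 -> 'cV[F]_m2 -> Prop) :
  isaff R1 -> isaff R2 ->
  isaff (fun p q => R1 (usubmx p) (usubmx q) /\ R2 (dsubmx p) (dsubmx q)).
Proof.
move=> [A1 [b1 [hA1 [hb1 h1]]]] [A2 [b2 [hA2 [hb2 h2]]]].
exists (block_mx A1 0 0 A2), (col_mx b1 b2); split.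
  by apply: rmx_block => //; apply: rmx0.
split; first exact: rmx_col.
move=> p q; rewrite h1 h2.
have -> : block_mx A1 0 0 A2 *m p + col_mx b1 b2 =
   col_mx (A1 *m usubmx p + b1) (A2 *m dsubmx p + b2).
  by rewrite -{1}[p]vsubmxK mul_block_col !mul0mx addr0 add0r add_col_mx.
split => [[<- <-]|->]; first by rewrite vsubmxK.
by rewrite col_mxKu col_mxKd.
Qed.

End Aff.


Section Tr.
Variable k : fieldType.
Local Notation F := (kx k).
Local Notation ratp := (@ratp k).

Lemma blk n m (A : 'M[F]_(m + 1, n + 1)) (b : 'cV[F]_(m + 1)) p (y : 'cV[F]_1) :
  A *m col_mx p y + b =
  col_mx (ulsubmx A *m p + y 0 0 *: ursubmx A + usubmx b)
         (dlsubmx A *m p + y 0 0 *: drsubmx A + dsubmx b).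
Proof.
by rewrite -{1}[A]submxK mul_block_col -{1}[b]vsubmxK add_col_mx !mulmx_cV1.
Qed.

Lemma isaff_trace n m (c : circ k (n + 1) (m + 1)) :
  isaff (sem c) -> isaff (sem (trace c)).
Proof.
move=> [A [b [hA [hb h]]]].
set A11 := ulsubmx A; set A12 := ursubmx A; set A21 := dlsubmx A; set A22 := drsubmx A.
set b1 := usubmx b; set b2 := dsubmx b.
set a := A22 0 0; set x := kx_x k.
have ha : ratp a by apply: rmx_dr.
have [hd hs] := ratp_fb ha.
set s := x / (1 - x * a) in hs.
exists (A11 + s *: (A12 *m A21)), (b1 + s *: (A12 *m b2)); split.
  apply: rmx_add; first exact: rmx_ul.
  by apply: rmx_scale => //; apply: rmx_mul; [apply: rmx_ur | apply: rmx_dl].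
split.
  apply: rmx_add; first exact: rmx_u.
  by apply: rmx_scale => //; apply: rmx_mul; [apply: rmx_ur | apply: rmx_d].
move=> p q.
set w := (A21 *m p) 0 0 + b2 0 0.
have key : forall t, t = s * w ->
  A11 *m p + t *: A12 + b1 = (A11 + s *: (A12 *m A21)) *m p + (b1 + s *: (A12 *m b2)).
  move=> t ->; rewrite mulmxDl -scalemxAl -mulmxA !mulmx_cV1 -scalerA.
  by rewrite /w scalerDl scalerDr addr_shuf.
rewrite sem_trace; split.
  move=> [y [z [hc hy]]].
  move: hc; rewrite h blk => hc.
  have [hq hz] := eq_col_mx hc.
  have hz0 : z 0 0 = w + x * z 0 0 * a.
    by rewrite /w /a /A21 /A22 /b2 /x {1}hz hy !mxE addrAC.
  rewrite hq; apply: key.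
  have hz1 := g_tr1 hz0 hd.
  by rewrite hy mxE hz1; exact: (g_tr3 _ hd).
move=> hq.
set t0 := w / (1 - x * a).
have e2 : (const_mx t0 : 'cV_1) = dlsubmx A *m p + (x * t0) *: drsubmx A + dsubmx b.
  apply/cV1P; rewrite mxE /t0 {1}(g_tr2 w hd).
  set t := w / _.
  by rewrite /w /a /A21 /A22 /b2 !mxE addrAC.
have ey : (x *: const_mx t0 : 'cV_1) 0 0 = x * t0 by rewrite !mxE.
exists (x *: const_mx t0), (const_mx t0); split => //.
rewrite h blk ey -e2 hq (key _ (g_tr3 _ hd)).
done.
Qed.

Lemma asfg_aff n m (g : circ k n m) : asfg g -> isaff (sem g).
Proof.
elim.
- exact: isaff_copy.
- exact: isaff_disc.
- exact: isaff_amp.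
- exact: isaff_reg.
- exact: isaff_add.
- exact: isaff_zero.
- exact: isaff_one.
- exact: isaff_id0.
- exact: isaff_id1.
- exact: isaff_sw.
- by move=> n1 m1 l1 c d _ h1 _ h2; exact: isaff_seq h1 h2.
- by move=> n1 m1 n2 m2 c d _ h1 _ h2; exact: isaff_par h1 h2.
- by move=> n1 m1 c _ h; exact: isaff_trace.
Qed.

End Tr.


Lemma g_inv1 (G : fieldType) (ci cc Q x p q : G) : ci * cc = 1 -> Q * x + cc != 0 ->
  q = ci * (p + - 1 * (Q * (x * q))) -> q = (Q * x + cc)^-1 * p.
Proof.
move=> hc hn hq.
have e : cc * q = p - Q * (x * q) by rewrite {1}hq mulrA (mulrC cc) hc mul1r mulN1r.
move/eqP: e; rewrite eq_sym subr_eq => /eqP ->.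
by field; rewrite hn.
Qed.
Lemma g_inv2 (G : fieldType) (ci cc Q x p : G) : ci * cc = 1 -> Q * x + cc != 0 ->
  (Q * x + cc)^-1 * p = ci * (p + - 1 * (Q * (x * ((Q * x + cc)^-1 * p)))).
Proof.
move=> hc hn.
have hcc : cc != 0 by apply: contra_eq_neq hc => ->; rewrite mulr0 eq_sym oner_neq0.
have -> : ci = cc^-1 by rewrite -[ci]mulr1 -(mulfV hcc) mulrA hc mul1r.
by field; rewrite hn hcc.
Qed.

Section Real.
Variable k : fieldType.
Local Notation F := (kx k).
Local Notation ratp := (@ratp k).

Definition fn n m (g : circ k n m) (f : 'cV[F]_n -> 'cV[F]_m) :=
  forall p q, sem g p q <-> q = f p.
Definition real n m (f : 'cV[F]_n -> 'cV[F]_m) :=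
  exists g : circ k n m, asfg g /\ fn g f.

Lemma real_ext n m (f f' : 'cV[F]_n -> 'cV[F]_m) : real f -> (forall p, f p = f' p) -> real f'.
Proof. by move=> [g [hg h]] e; exists g; split => // p q; rewrite h e. Qed.

Lemma real_seq n m l (f1 : 'cV[F]_n -> 'cV[F]_m) (f2 : 'cV[F]_m -> 'cV[F]_l) :
  real f1 -> real f2 -> real (fun p => f2 (f1 p)).
Proof.
move=> [g1 [hg1 h1]] [g2 [hg2 h2]]; exists (Seq g1 g2); split; first exact: asfg_seq.
move=> p q; split; first by move=> [y [/h1 -> /h2 ->]].
by move=> ->; exists (f1 p); split; [apply/h1 | apply/h2].
Qed.

Lemma real_par n1 m1 n2 m2 (f1 : 'cV[F]_n1 -> 'cV[F]_m1) (f2 : 'cV[F]_n2 -> 'cV[F]_m2) :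
  real f1 -> real f2 -> real (fun p => col_mx (f1 (usubmx p)) (f2 (dsubmx p))).
Proof.
move=> [g1 [hg1 h1]] [g2 [hg2 h2]]; exists (Par g1 g2); split; first exact: asfg_par.
move=> p q; rewrite sem_par h1 h2; split => [[<- <-]|->]; first by rewrite vsubmxK.
by rewrite col_mxKu col_mxKd.
Qed.

Lemma real_id1 : real (fun p : 'cV[F]_1 => p).
Proof. by exists Id1; split; [exact: asfg_id1 | move=> p q; split => ->]. Qed.

Lemma real_idn n : real (fun p : 'cV[F]_n => p).
Proof.
exists (idn k n); split; last by move=> p q; rewrite sem_idn; split => ->.
elim: n => [|n IH] /=; [exact: asfg_id0 | ].
exact: (@asfg_par _ 1 1 n n Id1 (idn _ n) (asfg_id1 _) IH).
Qed.

Lemma real_copy : real (fun p : 'cV[F]_1 => (col_mx p p : 'cV_2)).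
Proof.
exists Copy; split; first exact: asfg_copy.
by move=> p q; rewrite col_mx_const1.
Qed.

Lemma real_addv : real (fun v : 'cV[F]_(1 + 1) => usubmx v + dsubmx v).
Proof.
exists Add; split; first exact: asfg_add.
move=> p q; rewrite /= /rel_add.
suff -> : (const_mx (p 0 0 + p ord_max 0) : 'cV[F]_1) = usubmx p + dsubmx p by [].
apply/cV1P; rewrite !mxE; congr (p _ _ + p _ _); exact: val_inj.
Qed.

Lemma real_swap : real (fun v : 'cV[F]_(1 + 1) => (col_mx (dsubmx v) (usubmx v) : 'cV_(1 + 1))).
Proof.
exists Sw; split; first exact: asfg_sw.
move=> p q; rewrite /= /rel_sw.
suff -> : (\col_(i < 2) p (rev_ord i) 0 : 'cV[F]_2) = col_mx (dsubmx p) (usubmx p) by [].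
apply/matrixP => i j; rewrite !ord1 !mxE.
case: splitP => l hl; rewrite !mxE !ord1; congr (p _ _); apply: val_inj => /=.
  by move: hl; rewrite [l]ord1; case: i => [[|[|]]].
by move: hl; rewrite [l]ord1; case: i => [[|[|]]].
Qed.

Lemma real_amp r : real (fun p : 'cV[F]_1 => kx_const r *: p).
Proof. by exists (Amp r); split; [exact: asfg_amp | move=> p q]. Qed.

Lemma real_reg : real (fun p : 'cV[F]_1 => kx_x k *: p).
Proof. by exists Reg; split; [exact: asfg_reg | move=> p q]. Qed.

Lemma real_poly (P : {poly k}) : real (fun p : 'cV[F]_1 => (P%:F : F) *: p).
Proof.
elim/poly_ind: P => [|P c IH].
  exists (Seq Disc Zero); split; first by apply: asfg_seq; constructor.
  move=> p q; split; first by move=> [y [_ ->]]; rewrite tofrac0 scale0r.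
  by move=> ->; exists 0; split => //=; rewrite /rel_zero tofrac0 scale0r.
have := real_seq real_copy (real_seq (real_par (real_seq real_reg IH) (real_amp c)) real_addv).
move/real_ext; apply => p /=.
rewrite (@col_mxKu F 1 1 1) (@col_mxKd F 1 1 1) (@col_mxKu F 1 1 1) (@col_mxKd F 1 1 1).
by rewrite tofracD tofracM scalerDl -scalerA /kx_x /kx_const.
Qed.

Lemma kx_constV (c : k) : c != 0 -> kx_const (c^-1) * kx_const c = 1.
Proof. by move=> h; rewrite /kx_const -tofracM -polyCM mulVf // tofrac1. Qed.
Lemma kx_constN1 : kx_const (-1 : k) = -1.
Proof. by rewrite /kx_const polyCN tofracN tofrac1. Qed.

Lemma real_inv (Q : {poly k}) : Q.[0] != 0 -> real (fun p : 'cV[F]_1 => (Q%:F : F)^-1 *: p).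
Proof.
move=> h.
have [Q' [c eQ]] : exists Q' c, Q = Q' * 'X + c%:P.
  elim/poly_ind: Q {h} => [|Q0 c0 _]; last by exists Q0, c0.
  by exists 0, 0; rewrite mul0r polyC0 addr0.
have hQ := nz_h0 h.
have hc : c != 0 by move: h; rewrite eQ hornerMXaddC mulr0 add0r.
have := real_seq (real_par real_id1 (real_seq (real_poly Q') (real_amp (-1))))
         (real_seq real_addv (real_seq (real_amp (c^-1)) real_copy)).
move=> [gD [hgD hD]].
exists (@trace k 1 1 gD); split; first exact: asfg_tr.
set W := fun (p y : 'cV[F]_1) => kx_const (c^-1) *: (p + -1 *: ((Q'%:F : F) *: y)).
have hD' : forall p y u, sem gD (col_mx p y) u <-> u = col_mx (W p y) (W p y).
  move=> p y u; rewrite hD /=.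
  rewrite (@col_mxKu F 1 1 1) (@col_mxKd F 1 1 1) (@col_mxKu F 1 1 1) (@col_mxKd F 1 1 1).
  by rewrite kx_constN1.
have eQF : (Q%:F : F) = (Q'%:F : F) * kx_x k + kx_const c.
  by rewrite eQ tofracD tofracM.
have hci := kx_constV hc.
have hn : (Q'%:F : F) * kx_x k + kx_const c != 0 by rewrite -eQF.
move=> p q; rewrite sem_trace; split.
  move=> [y [z [/hD' hcx hy]]].
  have [hq hz] := @eq_col_mx F 1 1 1 _ _ _ _ hcx.
  rewrite hz -hq in hy.
  apply/cV1P; rewrite [RHS]mxE eQF.
  apply: (g_inv1 hci hn).
  by rewrite {1}hq /W hy !mxE.
move=> hq; exists (kx_x k *: q), q; split => //.
apply/hD'.
suff e : q = W p (kx_x k *: q) by rewrite -e.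
apply/cV1P; rewrite hq /W !mxE eQF.
exact: g_inv2.
Qed.

Lemma real_rat (r : F) : ratp r -> real (fun p : 'cV[F]_1 => r *: p).
Proof.
move=> [P [Q [h ->]]].
have := real_seq (real_inv h) (real_poly P).
by move/real_ext; apply => p; rewrite scalerA.
Qed.

Lemma real_one : real (fun _ : 'cV[F]_0 => (const_mx 1 : 'cV[F]_1)).
Proof. by exists One; split; [exact: asfg_one | move=> p q]. Qed.

Lemma real_const m (b : 'cV[F]_m) : rmx b -> real (fun _ : 'cV[F]_0 => b).
Proof.
elim: m b => [|m IH] b hb.
  exists Id0; split; first exact: asfg_id0.
  by move=> p q; split => _; apply/matrixP => [[]].
have h1 : real (fun _ : 'cV[F]_0 => (usubmx (b : 'cV_(1 + m)))).
  have := real_seq real_one (real_rat (@rmx_u k 1 m 1 b hb 0 0)).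
  by move/real_ext; apply => p; apply/cV1P; rewrite !mxE mulr1.
have h2 := IH (dsubmx (b : 'cV_(1 + m))) (@rmx_d k 1 m 1 b hb).
have := real_par h1 h2.
by move/real_ext; apply => p; rewrite vsubmxK.
Qed.

Lemma cs1 N (u u' : 'cV[F]_1) (X : 'cV[F]_N) :
  (col_mx (col_mx u u') X : 'cV_(1 + 1 + N)) = (col_mx u (col_mx u' X) : 'cV_(1 + (1 + N))).
Proof. by rewrite col_mxA castmx_id. Qed.

Lemma real_K (r : F) : ratp r ->
  real (fun v : 'cV[F]_(1 + 1) => r *: usubmx v + dsubmx v).
Proof.
move=> hr; have := real_seq (real_par (real_rat hr) real_id1) real_addv.
move/real_ext; apply => v /=.
by rewrite (@col_mxKu F 1 1 1) (@col_mxKd F 1 1 1).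
Qed.

Lemma real_J (r : F) : ratp r ->
  real (fun v : 'cV[F]_(1 + 1) => (col_mx (usubmx v) (r *: usubmx v + dsubmx v) : 'cV_(1 + 1))).
Proof.
move=> hr.
have := real_seq (real_par real_copy real_id1) (real_par real_id1 (real_K hr)).
move/real_ext; apply => v /=.
rewrite cs1 (@col_mxKu F 1 (1 + 1) 1) (@col_mxKd F 1 (1 + 1) 1).
by rewrite (@col_mxKu F 1 1 1) (@col_mxKd F 1 1 1).
Qed.

Lemma real_H m (a : 'cV[F]_m) : rmx a ->
  real (fun v : 'cV[F]_(1 + m) => usubmx v 0 0 *: a + dsubmx v).
Proof.
elim: m a => [|m IH] a ha.
  exists Disc; split; first exact: asfg_disc.
  by move=> p q; split => // _; apply/matrixP => [[]].
pose a0 := usubmx (a : 'cV_(1 + m)); pose a' := dsubmx (a : 'cV_(1 + m)).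
have ha0 : ratp (a0 0 0) := @rmx_u k 1 m 1 a ha 0 0.
have ha' : rmx a' := @rmx_d k 1 m 1 a ha.
have := real_seq (real_par (real_J ha0) (real_idn m))
   (real_seq (real_par real_swap (real_idn m)) (real_par real_id1 (IH a' ha'))).
move/real_ext; apply => v /=.
have [u [w0 [w' ->]]] : exists (u w0 : 'cV[F]_1) (w' : 'cV[F]_m),
    v = col_mx (col_mx u w0) w'.
  exists (usubmx (usubmx v)), (dsubmx (usubmx v)), (dsubmx v).
  by rewrite (@vsubmxK F 1 1 1) (@vsubmxK F (1 + 1) m 1).
rewrite !(@col_mxKu F (1 + 1) m 1) !(@col_mxKd F (1 + 1) m 1).
rewrite !(@col_mxKu F 1 1 1) !(@col_mxKd F 1 1 1).
rewrite !cs1 !(@col_mxKu F 1 (1 + m) 1) !(@col_mxKd F 1 (1 + m) 1).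
rewrite (@col_mxKu F 1 m 1) (@col_mxKd F 1 m 1).
rewrite -[a](@vsubmxK F 1 m 1) -/a0 -/a' (@scale_col_mx F 1 m 1) (@add_col_mx F 1 m 1).
have e : a0 0 0 *: u = u 0 0 *: a0 by apply/cV1P; rewrite !mxE mulrC.
by rewrite e.
Qed.

Lemma real_affine n m (A : 'M[F]_(m, n)) (b : 'cV[F]_m) :
  rmx A -> rmx b -> real (fun p => A *m p + b).
Proof.
elim: n m A b => [|n IH] m A b hA hb.
  have := real_const hb.
  by move/real_ext; apply => p; rewrite [p]flatmx0 mulmx0 add0r.
pose a := lsubmx (A : 'M_(m, 1 + n)); pose A' := rsubmx (A : 'M_(m, 1 + n)).
have ha : rmx a by move=> i j; rewrite /a mxE.
have hA' : rmx A' by move=> i j; rewrite /A' mxE.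
have := real_seq (real_par real_id1 (IH m A' b hA' hb)) (real_H ha).
move/real_ext; apply => p /=.
rewrite (@col_mxKu F 1 m 1) (@col_mxKd F 1 m 1).
have e : A *m p = a *m usubmx p + A' *m dsubmx p.
  by rewrite -{1}[A](@hsubmxK F m 1 n) -{1}[p](@vsubmxK F 1 n 1) (@mul_row_col F m 1 n 1).
by rewrite e mulmx_cV1 addrA.
Qed.

End Real.


Theorem proposition11 (k : fieldType) (n m : nat) (c : circ k n m) :
  (exists (A : 'M[kx k]_(m, n)) (b : 'cV[kx k]_m),
      (forall i j, ratp (A i j)) /\ (forall i j, ratp (b i j)) /\
      (forall p q, sem c p q <-> q = A *m p + b))
  <->
  (exists g : circ k n m, asfg g /\ (forall p q, sem g p q <-> sem c p q)).
Proof.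
split.
  move=> [A [b [hA [hb h]]]].
  have [g [hg hf]] := @real_affine k n m A b hA hb.
  exists g; split => // p q; split.
    by move/hf => ->; apply/h.
  by move/h => ->; apply/hf.
move=> [g [hg he]].
have [A [b [hA [hb h]]]] := asfg_aff hg.
exists A, b; split => //; split => // p q; split.
  by move/he/h.
by move/h/he.
Qed.
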